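(* Let $\mathcal{A}$ be a pOC with state set $Q$ and let $p,q\in Q$ be such that $[p{\downarrow}q]>0$ and $\mathrm{Pre}^*(q(0))\cap\mathrm{Post}^*(p(1))$ is finite. Then $$E(p{\downarrow}q)\le\frac{15|Q|^3}{x_{\min}^{4|Q|^3}}.$$
   Context: A pOC is $\mathcal{A}=(Q,\delta^{=0},\delta^{>0},P^{=0},P^{>0})$ with the following components. - $\delta^{>0}\subseteq Q\times\{-1,0,1\}\times Q$ are the positive rules and $\delta^{=0}\subseteq Q\times\{0,1\}\times Q$ are the zero rules. Every state has both kinds of outgoing rule. - $P^{>0}$ and $P^{=0}$ are positive rational probability distributions over the outgoing rules of each state. $\mathcal{M}_\mathcal{A}$ is the Markov chain on configurations $p(i)$ with the following transitions: - $p(0)\to q(c)$ with probability $P^{=0}(p,c,q)$; - for $i\ge1$, $p(i)\to q(i+c)$ with probability $P^{>0}(p,c,q)$. $\mathrm{Pre}^*(C)$ and $\mathrm{Post}^*(C)$ are the sets of configurations from which $C$ is reachable, respectively which are reachable from $C$. $\mathrm{Run}(p{\downarrow}q)$ is the set of runs from $p(1)$ that visit $q(0)$ with the counter positive before that visit. $[p{\downarrow}q]$ is its probability, and $E(p{\downarrow}q)$ is the conditional expected number of transitions until the first visit of $q(0)$ given $\mathrm{Run}(p{\downarrow}q)$. $x_{\min}$ is the least positive probability used in the rules of $\mathcal{A}$. *)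

(* Defs.v *)
From HB Require Import structures.
From mathcomp Require Import all_boot all_order all_algebra.
From mathcomp Require Import all_classical all_reals all_analysis.
Set Implicit Arguments. Unset Strict Implicit. Unset Printing Implicit Defensive.
Import Order.TTheory GRing.Theory Num.Theory.
Local Open Scope ring_scope.

(* A pOC over the finite state set Q is given by two probability-weight
   functions:
   - Pz p c q = P^{=0}(p, c, q) for the zero rule (p, c, q), c : 'I_2 meaning
     counter change c in {0,1};
   - Pp p c q = P^{>0}(p, c - 1, q) for the positive rule (p, c-1, q),
     c : 'I_3 meaning counter change c - 1 in {-1,0,1}.
   The rules delta^{=0}, delta^{>0} are the supports (weights > 0). *)
Definition is_pOC (R : realType) (Q : finType)
  (Pz : Q -> 'I_2 -> Q -> R) (Pp : Q -> 'I_3 -> Q -> R) : Prop :=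
  (forall p c q, 0 <= Pz p c q) /\
  (forall p c q, 0 <= Pp p c q) /\
  (forall p, \sum_(c : 'I_2) \sum_(q : Q) Pz p c q = 1) /\
  (forall p, \sum_(c : 'I_3) \sum_(q : Q) Pp p c q = 1) /\
  (forall p c q, exists r : rat, Pz p c q = ratr r) /\
  (forall p c q, exists r : rat, Pp p c q = ratr r).

Section POC.
Variables (R : realType) (Q : finType).
Variables (Pz : Q -> 'I_2 -> Q -> R) (Pp : Q -> 'I_3 -> Q -> R).

Definition trans (x y : Q * nat) : R :=
  match x, y with
  | (p, i), (q, j) =>
    if i == 0%N then \sum_(c : 'I_2 | j == nat_of_ord c) Pz p c q
    else \sum_(c : 'I_3 | j == (i + c - 1)%N) Pp p c q
  end.

Inductive reach : Q * nat -> Q * nat -> Prop :=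
| reach_refl x : reach x x
| reach_step x y z : 0 < trans x y -> reach y z -> reach x z.

Definition Pre (C : set (Q * nat)) : set (Q * nat) :=
  [set x | exists2 y, C y & reach x y].
Definition Post (C : set (Q * nat)) : set (Q * nat) :=
  [set y | exists2 x, C x & reach x y].

Definition cfg n (x : Q * 'I_n) : Q * nat := (x.1, nat_of_ord x.2).

(* Probability that a run from p(1) visits q(0) for the first time at step n
   with the counter positive at all earlier steps: sum over all paths of
   length n (counters are at most n+1 after n steps from p(1)) of the
   product of the transition probabilities. *)
Definition hitn (p q : Q) (n : nat) : R :=
  \sum_(w : {ffun 'I_n.+1 -> Q * 'I_n.+2} |
          [&& ((w ord0).1 == p) && (nat_of_ord (w ord0).2 == 1%N),
              ((w ord_max).1 == q) && (nat_of_ord (w ord_max).2 == 0%N) &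
              [forall i : 'I_n.+1, (i < n)%N ==> (0 < (w i).2)%N]])
    \prod_(i < n) trans (cfg (w (inord i))) (cfg (w (inord i.+1))).

Definition hitprob (p q : Q) : \bar R := (\sum_(n <oo) (hitn p q n)%:E)%E.

Definition condE (p q : Q) : \bar R :=
  (\sum_(n <oo) ((n%:R * hitn p q n) / fine (hitprob p q))%:E)%E.

Definition xmin : R :=
  Num.min (\big[Num.min/1]_(t : Q * 'I_2 * Q | 0 < Pz t.1.1 t.1.2 t.2)
              Pz t.1.1 t.1.2 t.2)
          (\big[Num.min/1]_(t : Q * 'I_3 * Q | 0 < Pp t.1.1 t.1.2 t.2)
              Pp t.1.1 t.1.2 t.2).

End POC.

(* Main.v *)
Require Import Defs.
From HB Require Import structures.
From mathcomp Require Import all_boot all_order all_algebra.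
From mathcomp Require Import all_classical all_reals all_analysis.
From mathcomp Require Import zify ring lra.
Set Implicit Arguments. Unset Strict Implicit. Unset Printing Implicit Defensive.
Import Order.TTheory GRing.Theory Num.Theory.
Local Open Scope ring_scope.

Section Proofs.
Variables (R : realType) (Q : finType).
Variables (Pz : Q -> 'I_2 -> Q -> R) (Pp : Q -> 'I_3 -> Q -> R) (p q : Q).
Local Notation trans := (trans Pz Pp).
Local Notation q0 := (q, 0%N).
Local Arguments Defs.trans : simpl never.

Lemma sum_ord_pred1 K m (F : nat -> R) : (m < K)%N ->
  \sum_(j < K | (j : nat) == m) F j = F m.
Proof.
by move=> Hm; rewrite (big_pred1 (Ordinal Hm)).
Qed.

Definition consf (T : finType) n (t : T) (w : {ffun 'I_n.+1 -> T}) : {ffun 'I_n.+2 -> T} :=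
  [ffun i : 'I_n.+2 => if (i : nat) == 0%N then t else w (inord i.-1)].

Lemma sum_ffunS (T : finType) n (F : {ffun 'I_n.+2 -> T} -> R) :
  \sum_w F w = \sum_(t : T) \sum_(w : {ffun 'I_n.+1 -> T}) F (consf t w).
Proof.
rewrite pair_big /= (reindex (fun pw : T * {ffun 'I_n.+1 -> T} => consf pw.1 pw.2)) //.
exists (fun w : {ffun 'I_n.+2 -> T} => (w ord0, [ffun j : 'I_n.+1 => w (inord j.+1)])).
  move=> [t w] _ /=; congr pair; first by rewrite ffunE.
  apply/ffunP => j; rewrite !ffunE inordK /=; last exact: (ltn_ord j).
  by congr (w _); apply: val_inj; rewrite /= inordK.
move=> w _ /=; apply/ffunP => i; rewrite ffunE.
case: eqP => [i0|in0].
  by congr (w _); apply: val_inj; rewrite /= i0.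
rewrite ffunE; congr (w _); apply: val_inj => /=.
have hi := ltn_ord i; have i0 : (0 < i)%N by rewrite lt0n; apply/eqP.
have hv : ((inord i.-1 : 'I_n.+1) : nat) = i.-1 by rewrite inordK; lia.
by rewrite inordK hv; lia.
Qed.

Lemma sum_ffun1 (T : finType) (F : {ffun 'I_1 -> T} -> R) :
  \sum_w F w = \sum_(t : T) F [ffun _ => t].
Proof.
rewrite (reindex (fun t : T => [ffun _ : 'I_1 => t])) //.
exists (fun w : {ffun 'I_1 -> T} => w ord0); first by move=> t _; rewrite ffunE.
move=> w _; apply/ffunP => i; rewrite ffunE; congr (w _); apply: val_inj.
by case: i => -[].
Qed.

Fixpoint hit0 (n : nat) (x : Q * nat) : R :=
  if n is n'.+1 then
    (if (0 < x.2)%N then \sum_(c : 'I_3) \sum_(r : Q) Pp x.1 c r * hit0 n' (r, (x.2 + c - 1)%N)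
     else 0)
  else (x == q0)%:R.

Lemma transE_pos s i t j : (0 < i)%N ->
  trans (s, i) (t, j) = \sum_(c : 'I_3 | j == (i + c - 1)%N) Pp s c t.
Proof. by move=> hi; rewrite /Defs.trans (gtn_eqF hi). Qed.

Lemma transE0 s t j : trans (s, 0%N) (t, j) = \sum_(c : 'I_2 | j == c) Pz s c t.
Proof. by []. Qed.

Lemma cfg_eq K (a b : Q * 'I_K) : (cfg a == cfg b) = (a == b).
Proof. by case: a => a1 a2; case: b => b1 b2; rewrite /cfg /= !xpair_eqE val_eqE. Qed.

Lemma trans_sum x (f : Q * nat -> R) K : (0 < x.2)%N -> (x.2.+1 < K)%N ->
  \sum_(y : Q * 'I_K) trans x (cfg y) * f (cfg y) =
  \sum_(c : 'I_3) \sum_(r : Q) Pp x.1 c r * f (r, (x.2 + c - 1)%N).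
Proof.
case: x => s i /= hi hK.
transitivity (\sum_(r : Q) \sum_(j : 'I_K) trans (s, i) (r, (j : nat)) * f (r, (j : nat))).
  by rewrite pair_big.
rewrite [RHS]exchange_big; apply: eq_bigr => r _.
rewrite [LHS](eq_bigr (fun j : 'I_K => \sum_(c : 'I_3) if (j:nat) == (i + c - 1)%N then Pp s c r * f (r, (j:nat)) else 0)); last first.
  by move=> j _; rewrite transE_pos // mulr_suml big_mkcond.
rewrite exchange_big; apply: eq_bigr => c _ /=.
rewrite -big_mkcond /= (sum_ord_pred1 (fun j => Pp s c r * f (r, j))) //.
have := ltn_ord c; lia.
Qed.

Definition PS n K (x : Q * nat) : R :=
  \sum_(w : {ffun 'I_n.+1 -> Q * 'I_K} | [&& cfg (w ord0) == x, cfg (w ord_max) == q0 &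
       [forall i : 'I_n.+1, (i < n)%N ==> (0 < (w i).2)%N]])
    \prod_(i < n) trans (cfg (w (inord i))) (cfg (w (inord i.+1))).

Lemma hitn_PS n : hitn Pz Pp p q n = PS n n.+2 (p, 1%N).
Proof. by apply: eq_bigl => w; rewrite /cfg !xpair_eqE. Qed.

Lemma consf0 (T : finType) n (t : T) (w : {ffun 'I_n.+1 -> T}) : consf t w (inord 0) = t.
Proof. by rewrite ffunE inordK. Qed.

Lemma consfS (T : finType) n (t : T) (w : {ffun 'I_n.+1 -> T}) k : (k < n.+1)%N ->
  consf t w (inord k.+1) = w (inord k).
Proof. by move=> hk; rewrite ffunE inordK. Qed.

Lemma consf_ord0 (T : finType) n (t : T) (w : {ffun 'I_n.+1 -> T}) : consf t w ord0 = t.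
Proof. by rewrite ffunE. Qed.

Lemma consf_max (T : finType) n (t : T) (w : {ffun 'I_n.+1 -> T}) :
  consf t w ord_max = w ord_max.
Proof. by rewrite ffunE /=; congr (w _); apply: val_inj; rewrite /= inordK. Qed.

Lemma consf_lift (T : finType) n (t : T) (w : {ffun 'I_n.+1 -> T}) j :
  consf t w (lift ord0 j) = w j.
Proof. by rewrite ffunE lift0 /= inord_val. Qed.

Lemma forall_consf K n (t : Q * 'I_K) (w : {ffun 'I_n.+1 -> Q * 'I_K}) :
  [forall i : 'I_n.+2, (i < n.+1)%N ==> (0 < (consf t w i).2)%N] =
  (0 < t.2)%N && [forall j : 'I_n.+1, (j < n)%N ==> (0 < (w j).2)%N].
Proof.
apply/forallP/andP.
- move=> H; split.
    by have := H ord0; rewrite consf_ord0.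
  apply/forallP => j; apply/implyP => hj.
  by have := H (lift ord0 j); rewrite consf_lift lift0 ltnS hj.
- case=> h0 /forallP H i; apply/implyP => hi.
  case: (unliftP ord0 i) hi => [j ->|->]; last by rewrite consf_ord0.
  rewrite consf_lift lift0 ltnS => hj.
  by have := H j; rewrite hj.
Qed.

Lemma prod_consf K n (t : Q * 'I_K) (w : {ffun 'I_n.+1 -> Q * 'I_K}) :
  \prod_(i < n.+1) trans (cfg (consf t w (inord i))) (cfg (consf t w (inord i.+1))) =
  trans (cfg t) (cfg (w ord0)) *
  \prod_(i < n) trans (cfg (w (inord i))) (cfg (w (inord i.+1))).
Proof.
rewrite big_ord_recl consf0 (@consfS _ _ t w 0) //.
have -> : (inord 0 : 'I_n.+1) = ord0 by apply: val_inj; rewrite /= inordK.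
congr (_ * _); apply: eq_bigr => i _.
rewrite lift0 consfS ?consfS //; have := ltn_ord i; lia.
Qed.

Lemma PS_S n K x : (x.2 < K)%N ->
  PS n.+1 K x = if (0 < x.2)%N then \sum_(y : Q * 'I_K) trans x (cfg y) * PS n K (cfg y) else 0.
Proof.
case: x => s i /= hx; rewrite /PS big_mkcond sum_ffunS.
rewrite (eq_bigr (fun t : Q * 'I_K => \sum_(w : {ffun 'I_n.+1 -> Q * 'I_K})
   if [&& cfg t == (s, i), cfg (w ord_max) == q0 & (0 < t.2)%N &&
        [forall j : 'I_n.+1, (j < n)%N ==> (0 < (w j).2)%N]]
   then trans (cfg t) (cfg (w ord0)) *
        \prod_(i < n) trans (cfg (w (inord i))) (cfg (w (inord i.+1))) else 0)); last first.
  by move=> t _; apply: eq_bigr => w _; rewrite consf_ord0 consf_max forall_consf prod_consf.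
pose t0 : Q * 'I_K := (s, Ordinal hx).
rewrite (bigD1 t0) //= [X in _ + X]big1 ?addr0; last first.
  move=> t ht; apply: big1 => w _.
  have -> : (cfg t == (s, i)) = (t == t0) by rewrite -cfg_eq.
  by rewrite (negbTE ht).
have -> : cfg t0 = (s, i) by [].
rewrite eqxx /=.
case: (ltnP 0 i) => hi /=; last first.
  by apply: big1 => w _; rewrite andbF.
under [RHS]eq_bigr do rewrite mulr_sumr big_mkcond.
rewrite exchange_big; apply: eq_bigr => w _.
case: ifP => hc.
  rewrite (eq_bigr (fun y => if y == w ord0 then
     trans (s, i) (cfg y) * \prod_(i < n) trans (cfg (w (inord i))) (cfg (w (inord i.+1))) else 0)).
    by rewrite -big_mkcond big_pred1_eq.
  by move=> y _; rewrite andbT cfg_eq eq_sym.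
by rewrite big1 // => y _; rewrite andbF.
Qed.

Lemma trans_gap x y : (x.2.+1 < y.2)%N -> trans x y = 0.
Proof.
case: x => s i; case: y => t j /= h; rewrite /Defs.trans.
by case: ifP => _; apply: big_pred0 => c; apply/negbTE/eqP; have := ltn_ord c; lia.
Qed.

Lemma trans_gap2 x y : (y.2.+1 < x.2)%N -> trans x y = 0.
Proof.
case: x => s i; case: y => t j /= h; rewrite /Defs.trans.
case: ifP => /eqP hi; first lia.
by apply: big_pred0 => c; apply/negbTE/eqP; have := ltn_ord c; lia.
Qed.

Lemma PS_hit0 n K x : (x.2 + n < K)%N -> PS n K x = hit0 n x.
Proof.
elim: n x => [|n IH] x hK.
  rewrite /PS big_mkcond sum_ffun1 /=.
  under eq_bigr => t _ do rewrite !ffunE big_ord0.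
  rewrite (_ : [forall i : 'I_1, true] = true); last by apply/forallP.
  under eq_bigr => t _ do rewrite andbT.
  case: (eqVneq x q0) => [->|hx] /=.
    have hK0 : (0 < K)%N by move: hK; rewrite addn0 => /=; lia.
    rewrite (bigD1 (q, Ordinal hK0)) //= [X in _ + X]big1 ?addr0.
      by rewrite /cfg /= eqxx.
    move=> t ht; rewrite andbb.
    have -> : (cfg t == q0) = (t == (q, Ordinal hK0)) by rewrite -cfg_eq.
    by rewrite (negbTE ht).
  apply: big1 => t _; case: ifP => // /andP [/eqP h1 /eqP h2].
  by move: hx; rewrite -h1 h2 eqxx.
rewrite PS_S; last by lia.
rewrite /=; case: ifP => hi //.
rewrite -(@trans_sum x (hit0 n) K) //; last by lia.
apply: eq_bigr => y _.
case: (ltnP x.2.+1 (cfg y).2) => hy.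
  by rewrite trans_gap // !mul0r.
by rewrite IH //; lia.
Qed.

Lemma hitn_hit0 n : hitn Pz Pp p q n = hit0 n (p, 1%N).
Proof. by rewrite hitn_PS PS_hit0 //= add1n. Qed.

Inductive pth (m : nat) : Q * nat -> Q * nat -> Prop :=
| pth0 x : pth m x x
| pthS x y z : (m <= x.2)%N -> 0 < trans x y -> pth m y z -> pth m x z.

Lemma pth_trans m x y z : pth m x y -> pth m y z -> pth m x z.
Proof.
elim=> {x y} [//|x y y' hx hxy _ IH] hz.
exact: pthS hx hxy (IH hz).
Qed.

Lemma pth_weak m m' x y : (m' <= m)%N -> pth m x y -> pth m' x y.
Proof.
move=> hm; elim=> {x y} [x|x y z hx hxy _ IH]; first exact: pth0.
by apply: pthS hxy IH; apply: leq_trans hx.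
Qed.

Lemma pth_reach m x y : pth m x y -> reach Pz Pp x y.
Proof.
elim=> {x y} [x|x y z _ hxy _ IH]; first exact: reach_refl.
exact: reach_step hxy IH.
Qed.

Lemma reach_pth x y : reach Pz Pp x y -> pth 0 x y.
Proof.
elim=> {x y} [x|x y z hxy _ IH]; first exact: pth0.
exact: pthS hxy IH.
Qed.

Lemma trans_shift s i t j d : (0 < i)%N -> trans (s, i + d) (t, j + d) = trans (s, i) (t, j).
Proof.
move=> hi; rewrite !transE_pos //; last by lia.
by apply: eq_bigl => c; apply/eqP/eqP; lia.
Qed.

Lemma pth_shift m d x z : (0 < m)%N -> pth m x z -> pth (m + d) (x.1, x.2 + d) (z.1, z.2 + d).
Proof.
move=> hm; elim=> {x z} [x|x y z hx hxy _ IH]; first exact: pth0.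
apply: pthS IH; first by rewrite /= leq_add2r.
rewrite trans_shift; last by apply: leq_trans hx.
by rewrite -!surjective_pairing.
Qed.

Lemma trans_diff x y : 0 < trans x y -> (y.2 <= x.2.+1)%N /\ (x.2 <= y.2.+1)%N.
Proof.
move=> h; split; rewrite leqNgt; apply/negP => h'.
  by move: h; rewrite trans_gap // ltxx.
by move: h; rewrite trans_gap2 // ltxx.
Qed.

Lemma pth_first b u z : pth b u z -> (b <= z.2)%N -> (b <= u.2)%N.
Proof. by case=> // x y z' hx. Qed.

Lemma LV a b y z : pth a y z -> (a <= b)%N -> (b <= z.2)%N ->
  pth b y z \/ exists t, pth a y (t, b) /\ pth b (t, b) z.
Proof.
move=> hp hab; elim: hp => {y z} [y|y y' z hy hyy' hp IH] hbz.
  by left; exact: pth0.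
case: (IH hbz) => [Hb|[t [h1 h2]]].
  case: (leqP b y.2) => hyb.
    by left; exact: pthS hyb hyy' Hb.
  have hb' := pth_first Hb hbz.
  have [hd1 _] := trans_diff hyy'.
  have e : y' = (y'.1, b) by rewrite [LHS]surjective_pairing; congr pair; lia.
  right; exists y'.1; split.
    by rewrite -e; exact: pthS hy hyy' (pth0 _ _).
  by rewrite -e.
by right; exists t; split => //; exact: pthS hy hyy' h1.
Qed.

Lemma FV b y z : pth 1 y z -> (z.2 <= b)%N -> (b <= y.2)%N ->
  exists t, pth b y (t, b) /\ pth 1 (t, b) z.
Proof.
elim=> {y z} [y|y y' z hy hyy' hp IH] hz hb.
  have e : y = (y.1, b) by rewrite [LHS]surjective_pairing; congr pair; lia.
  by exists y.1; rewrite -e; split; exact: pth0.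
case: (leqP b y'.2) => hb'.
  have [t [h1 h2]] := IH hz hb'.
  by exists t; split => //; exact: pthS hb hyy' h1.
have [_ hd2] := trans_diff hyy'.
have e : y = (y.1, b) by rewrite [LHS]surjective_pairing; congr pair; lia.
exists y.1; rewrite -e; split; first exact: pth0.
exact: pthS hy hyy' hp.
Qed.

Lemma asc_chain t r k : pth 1 (t, 1%N) (r, k) -> forall j, (1 <= j <= k)%N ->
  exists f : nat -> Q, f 1%N = t /\
   (forall l, (1 <= l <= j)%N -> pth l (f l, l) (r, k)) /\
   (forall l l', (1 <= l)%N -> (l < l')%N -> (l' <= j)%N -> pth l (f l, l) (f l', l')).
Proof.
move=> h0; elim=> [//|j IH] /andP [_ hj].
case: (posnP j) => [->|jpos].
  exists (fun _ => t); split=> //; split.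
    by move=> l hl; have -> : l = 1%N by lia.
  by move=> l l' *; lia.
have [f [f1 [fA fB]]] : exists f : nat -> Q, f 1%N = t /\
   (forall l, (1 <= l <= j)%N -> pth l (f l, l) (r, k)) /\
   (forall l l', (1 <= l)%N -> (l < l')%N -> (l' <= j)%N -> pth l (f l, l) (f l', l')).
  by apply: IH; lia.
have hfj := fA j ltac:(lia).
have [H|[t' [h1 h2]]] := LV hfj (leqnSn j) hj.
  by have := pth_first H hj; rewrite /=; lia.
exists (fun l => if l == j.+1 then t' else f l); split.
  by rewrite ifF //; apply/eqP; lia.
split.
  move=> l hl; case: eqP => [->//|hne].
  by apply: fA; lia.
move=> l l' hl hll' hl'; rewrite ifF; last by apply/eqP; lia.
case: eqP => [el'|hne].
  rewrite el'; case: (ltngtP l j) => [hlj|//|->//]; last by lia.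
  apply: pth_trans (fB l j hl hlj (leqnn j)) _.
  exact: pth_weak (ltnW hlj) h1.
by apply: fB => //; lia.
Qed.

Lemma desc_chain r k : pth 1 (r, k) q0 -> forall j, (j < k)%N ->
  exists g : nat -> Q, g k = r /\
   (forall l, (k - j <= l <= k)%N -> pth 1 (g l, l) q0) /\
   (forall l' l, (k - j <= l')%N -> (l' < l)%N -> (l <= k)%N -> pth l' (g l, l) (g l', l')).
Proof.
move=> h0; elim=> [|j IH] hj.
  exists (fun _ => r); split=> //; split.
    by move=> l hl; have -> : l = k by lia.
  by move=> l l' *; lia.
have [g [gk [gA gB]]] := IH (ltnW hj).
set c := (k - j)%N.
have hc := gA c ltac:(lia).
have [t [h1 h2]] := FV hc (leq0n c.-1) (leq_pred c).
exists (fun l => if l == c.-1 then t else g l); split.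
  by rewrite ifF //; apply/eqP; lia.
split.
  move=> l hl; case: eqP => [->//|hne].
  by apply: gA; lia.
move=> l' l hl' hll' hl.
have -> : (l == c.-1) = false by apply/eqP; lia.
case: eqP => [el'|hne].
  rewrite el'; case: (ltngtP c l) => [hcl|hlc|<-].
  - apply: pth_trans _ h1.
    by apply: pth_weak (gB c l (leqnn _) hcl hl); lia.
  - by lia.
  - by apply: pth_weak h1; lia.
by apply: gB => //; lia.
Qed.

Lemma pigeon (f : nat -> Q) : exists a b, [/\ (1 <= a)%N, (a < b)%N, (b <= #|Q|.+1)%N & f a = f b].
Proof.
case: (pselect (exists a b, [/\ (1 <= a)%N, (a < b)%N, (b <= #|Q|.+1)%N & f a = f b])) => // H.
exfalso.
pose g (i : 'I_#|Q|.+1) := f i.+1.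
have ginj : injective g.
  move=> i j hij; apply: val_inj; case: (ltngtP i j) => // hlt; exfalso; apply: H.
    by exists i.+1, j.+1; split => //; have := ltn_ord j.
  by exists j.+1, i.+1; split => //; have := ltn_ord i.
by have := leq_card g ginj; rewrite card_ord ltnn.
Qed.

Lemma up_pump s a b : (1 <= a)%N -> (a < b)%N -> pth a (s, a) (s, b) ->
  forall n, pth a (s, a) (s, (a + n * (b - a))%N).
Proof.
move=> ha hab h; elim=> [|n IH]; first by rewrite mul0n addn0; exact: pth0.
apply: pth_trans IH _.
have := pth_shift (n * (b - a)) ha h => /= /(pth_weak (leq_addr _ _)).
have -> : (a + n.+1 * (b - a) = b + n * (b - a))%N.
  by rewrite mulSn addnA (subnKC (ltnW hab)).
by [].
Qed.

Lemma down_pump t u v : (1 <= u)%N -> (u < v)%N -> pth u (t, v) (t, u) ->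
  forall n, pth u (t, (u + n * (v - u))%N) (t, u).
Proof.
move=> hu huv h; elim=> [|n IH]; first by rewrite mul0n addn0; exact: pth0.
apply: pth_trans _ IH.
have := pth_shift (n * (v - u)) hu h => /= /(pth_weak (leq_addr _ _)).
have -> : (u + n.+1 * (v - u) = v + n * (v - u))%N.
  by rewrite mulSn addnA (subnKC (ltnW huv)).
by [].
Qed.

Lemma counter_bound (B : nat) :
  (forall y, reach Pz Pp (p, 1%N) y -> reach Pz Pp y q0 -> (y.2 <= B)%N) ->
  forall r k, reach Pz Pp (p, 1%N) (r, k) -> pth 1 (r, k) q0 -> (k <= #|Q|)%N.
Proof.
move=> hB r k hpost hpre; rewrite leqNgt; apply/negP => hk.
have k1 : (1 <= k)%N by lia.
have [t [ht1 ht2]] : exists t, pth 0 (p, 1%N) (t, 1%N) /\ pth 1 (t, 1%N) (r, k).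
  have := LV (reach_pth hpost) (leq0n 1) k1.
  case=> [H|[t [h1 h2]]]; last by exists t.
  by exists p; split => //; exact: pth0.
have hkk : (1 <= k <= k)%N by rewrite k1 leqnn.
have [f [f1 [fA fB]]] := asc_chain ht2 hkk.
have [a [b [ha hab hb hfab]]] := pigeon f.
have hsab : pth a (f a, a) (f a, b) by rewrite {2}hfab; apply: fB => //; lia.
have hxs : pth 0 (p, 1%N) (f a, a).
  case: (ltngtP 1 a) => [h1a|h|e1a]; [|lia|by rewrite -e1a f1].
  apply: pth_trans ht1 _; apply: (pth_weak (leq0n 1)).
  by have := fB 1%N a (leqnn 1) h1a ltac:(lia); rewrite f1.
have hsb : pth b (f a, b) (r, k) by rewrite hfab; apply: fA; lia.
have hk1 : (k.-1 < k)%N by lia.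
have [g [gk [gA gB]]] := desc_chain hpre hk1.
have [u [v [hu huv hv hguv]]] := pigeon g.
have htvu : pth u (g u, v) (g u, u) by rewrite {1}hguv; apply: gB; lia.
have hrt : pth 1 (r, k) (g u, v).
  rewrite hguv; case: (ltngtP v k) => [hvk|//|->]; last by rewrite gk; exact: pth0.
    by rewrite -{1}gk; apply: (pth_weak (_ : 1 <= v)%N); [lia | apply: gB => //; lia].
  by lia.
have htq : pth 1 (g u, u) q0 by apply: gA; lia.
have cm : forall m, reach Pz Pp (p, 1%N) (f a, (b + m * (b - a) * (v - u))%N) /\
                     reach Pz Pp (f a, (b + m * (b - a) * (v - u))%N) q0.
  move=> m; split.
    apply: (@pth_reach 0); apply: pth_trans hxs _.
    have := up_pump ha hab hsab (m * (v - u)).+1.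
    have -> : (a + (m * (v - u)).+1 * (b - a) = b + m * (b - a) * (v - u))%N.
      by rewrite mulSn addnA (subnKC (ltnW hab)) mulnAC.
    by apply: pth_weak.
  apply: (@pth_reach 1).
  have mid : pth 1 (f a, b) (g u, v) by apply: pth_trans _ hrt; apply: pth_weak hsb; lia.
  have := pth_shift (m * (b - a) * (v - u)) (ltn0Sn 0) mid => /= /(pth_weak (leq_addr _ _)) h1.
  apply: pth_trans h1 _.
  have := down_pump hu huv htvu (m * (b - a)).+1.
  have -> : (u + (m * (b - a)).+1 * (v - u) = v + m * (b - a) * (v - u))%N.
    by rewrite mulSn addnA (subnKC (ltnW huv)).
  move/(pth_weak hu) => h2; exact: pth_trans h2 htq.
have := hB _ (cm B.+1).1 (cm B.+1).2 => /=.
have : (1 <= (b - a) * (v - u))%N by rewrite muln_gt0; apply/andP; split; lia.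
nia.
Qed.

Hypothesis Pp0 : forall s c r, 0 <= Pp s c r.
Hypothesis Pp1 : forall s, \sum_(c : 'I_3) \sum_(r : Q) Pp s c r = 1.

Lemma hit0_ge0 n x : 0 <= hit0 n x.
Proof.
elim: n x => [|n IH] x /=; first by rewrite ler0n.
case: ifP => // _; apply: sumr_ge0 => c _; apply: sumr_ge0 => r _.
exact: mulr_ge0.
Qed.

Lemma sum_step (F : nat -> Q * nat -> R) M s i :
  \sum_(m < M) \sum_(c : 'I_3) \sum_(r : Q) Pp s c r * F m (r, (i + c - 1)%N) =
  \sum_(c : 'I_3) \sum_(r : Q) Pp s c r * \sum_(m < M) F m (r, (i + c - 1)%N).
Proof.
rewrite exchange_big; apply: eq_bigr => c _; rewrite exchange_big.
by apply: eq_bigr => r _; rewrite mulr_sumr.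
Qed.

Lemma sumPp_le1 s (f : Q * nat -> R) i : (forall y, f y <= 1) ->
  \sum_(c : 'I_3) \sum_(r : Q) Pp s c r * f (r, (i + c - 1)%N) <= 1.
Proof.
move=> hf; rewrite -(Pp1 s); apply: ler_sum => c _; apply: ler_sum => r _.
by rewrite -{2}(mulr1 (Pp s c r)); apply: ler_wpM2l.
Qed.

Lemma V_le1 M x : \sum_(m < M) hit0 m x <= 1.
Proof.
elim: M x => [|M IH] x; first by rewrite big_ord0 ler01.
rewrite big_ord_recl.
under eq_bigr => i _ do rewrite lift0.
rewrite /=; case hx : (0 < x.2)%N.
  have -> : (x == q0) = false by apply/negbTE; apply/eqP => e; move: hx; rewrite e.
  rewrite (_ : (false%:R : R) = 0) // add0r (sum_step (fun m y => hit0 m y) M x.1 x.2).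
  by apply: (@sumPp_le1 x.1 (fun y => \sum_(m < M) hit0 m y) x.2) => y; apply: IH.
by rewrite big1 // addr0; case: (x == q0).
Qed.

Definition good x := reach Pz Pp (p, 1%N) x /\ (0 < x.2)%N /\ pth 1 x q0.
Definition goodb x : bool := `[< good x >].

Definition Op (f : Q * nat -> R) x : R :=
  if goodb x then \sum_(c : 'I_3) \sum_(r : Q) Pp x.1 c r * f (r, (x.2 + c - 1)%N) else 0.

Definition g0 x : R := (goodb x)%:R.

Fixpoint hg n x : R := (x == q0)%:R + (if n is n'.+1 then Op (hg n') x else 0).

Lemma Op_ge0 f x : (forall y, 0 <= f y) -> 0 <= Op f x.
Proof.
move=> hf; rewrite /Op; case: ifP => // _.
by apply: sumr_ge0 => c _; apply: sumr_ge0 => r _; apply: mulr_ge0.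
Qed.

Lemma Op_le f g x : (forall y, f y <= g y) -> Op f x <= Op g x.
Proof.
move=> hf; rewrite /Op; case: ifP => // _.
by apply: ler_sum => c _; apply: ler_sum => r _; apply: ler_wpM2l.
Qed.

Lemma Op_scale k f x : Op (fun y => k * f y) x = k * Op f x.
Proof.
rewrite /Op; case: ifP => _; last by rewrite mulr0.
rewrite mulr_sumr; apply: eq_bigr => c _; rewrite mulr_sumr.
by apply: eq_bigr => r _; rewrite mulrCA.
Qed.

Lemma Op_add f g x : Op (fun y => f y + g y) x = Op f x + Op g x.
Proof.
rewrite /Op; case: ifP => _; last by rewrite addr0.
rewrite -big_split; apply: eq_bigr => c _; rewrite -big_split.
by apply: eq_bigr => r _; rewrite mulrDr.
Qed.

Lemma Op_le1 f x : (forall y, f y <= 1) -> Op f x <= 1.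
Proof. by move=> hf; rewrite /Op; case: ifP => _; [apply: sumPp_le1 | apply: ler01]. Qed.

Lemma iterOp_ge0 n f x : (forall y, 0 <= f y) -> 0 <= iter n Op f x.
Proof. by move=> hf; elim: n x => [|n IH] x //=; apply: Op_ge0. Qed.

Lemma iterOp_le n f g x : (forall y, f y <= g y) -> iter n Op f x <= iter n Op g x.
Proof. by move=> hf; elim: n x => [|n IH] x //=; apply: Op_le. Qed.

Lemma iterOp_scale n k f x : iter n Op (fun y => k * f y) x = k * iter n Op f x.
Proof.
elim: n x => [|n IH] x //=.
have -> : iter n Op (fun y => k * f y) = (fun y => k * iter n Op f y) by apply/funext => y; exact: IH.
exact: Op_scale.
Qed.

Lemma goodb_q0 : goodb q0 = false.
Proof. by apply/negbTE/negP => /asboolP [_ [h _]]. Qed.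

Lemma goodb_pos x : goodb x -> (0 < x.2)%N.
Proof. by move/asboolP => [_ [h _]]. Qed.

Lemma g0_ge0 x : 0 <= g0 x.
Proof. by rewrite /g0 ler0n. Qed.

Lemma hg_ge0 n x : 0 <= hg n x.
Proof.
elim: n x => [|n IH] x /=; first by rewrite addr0 ler0n.
by rewrite addr_ge0 ?ler0n // Op_ge0.
Qed.

Lemma a_hg n x : iter n Op g0 x + hg n x <= 1.
Proof.
elim: n x => [|n IH] x /=.
  rewrite addr0 /g0; case: (eqVneq x q0) => [->|_]; first by rewrite goodb_q0 add0r.
  by rewrite addr0; case: (goodb x).
rewrite addrCA -Op_add.
case: (eqVneq x q0) => [->|_] /=.
  by rewrite /Op goodb_q0 addr0.
by rewrite add0r; apply: Op_le1 => y; exact: IH.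
Qed.

Lemma hg_mono n x : hg n x <= hg n.+1 x.
Proof.
elim: n x => [|n IH] x /=; first by rewrite addr0 lerDl Op_ge0 // => y; exact: hg_ge0.
by rewrite lerD2l; apply: Op_le.
Qed.

Lemma hg_monotone m n x : (m <= n)%N -> hg m x <= hg n x.
Proof.
move=> hmn; rewrite -(subnKC hmn); elim: (n - m)%N => [|d IH]; first by rewrite addn0.
by apply: le_trans IH _; rewrite addnS; exact: hg_mono.
Qed.

Definition eb (x y : Q * nat) : bool :=
  `[< good x /\ exists c : 'I_3, y.2 = (x.2 + c - 1)%N /\ 0 < Pp x.1 c y.1 >].

Lemma sum2_ge (F : 'I_3 -> Q -> R) c r : (forall c r, 0 <= F c r) ->
  F c r <= \sum_(c' : 'I_3) \sum_(r' : Q) F c' r'.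
Proof.
move=> h0.
have h1 : F c r <= \sum_(r' : Q) F c r' by rewrite (bigD1 r) //= lerDl sumr_ge0.
apply: le_trans h1 _.
by rewrite [X in _ <= X](bigD1 c) //= lerDl sumr_ge0 // => c' _; apply: sumr_ge0.
Qed.

Lemma hg_path (xm : R) : 0 <= xm -> (forall s c r, 0 < Pp s c r -> xm <= Pp s c r) ->
  forall s x, path eb x s -> last x s = q0 -> xm ^+ size s <= hg (size s) x.
Proof.
move=> xm0 hxm; elim=> [|y s IH] x /=.
  by move=> _ ->; rewrite eqxx expr0 addr0.
move=> /andP [/asboolP [hgx [c [hyc hPp]]] hp] hl.
have := IH y hp hl => hIH.
rewrite -(add0r (xm ^+ _)); apply: lerD; first exact: ler0n.
rewrite /Op (_ : goodb x = true); last by apply/asboolP.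
have := @sum2_ge (fun c r => Pp x.1 c r * hg (size s) (r, (x.2 + c - 1)%N)) c y.1.
move=> H; apply: le_trans (H _); last by move=> c' r'; apply: mulr_ge0 => //; exact: hg_ge0.
rewrite /= -hyc -surjective_pairing exprS.
by apply: ler_pM => //; [exact: exprn_ge0 | apply: hxm].
Qed.

Lemma sum_pos_ex (I : finType) (P : pred I) (F : I -> R) :
  0 < \sum_(i | P i) F i -> exists i, P i /\ 0 < F i.
Proof.
move=> h; case: (pselect (exists i, P i /\ 0 < F i)) => // H; exfalso.
have : \sum_(i | P i) F i <= 0.
  apply: sumr_le0 => i Pi; rewrite leNgt; apply/negP => hi; apply: H.
  by exists i.
by rewrite leNgt h.
Qed.

Lemma step_Pp x c r : (0 < x.2)%N -> 0 < Pp x.1 c r -> 0 < trans x (r, (x.2 + c - 1)%N).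
Proof.
case: x => s i /= hi hP; rewrite transE_pos //.
rewrite (bigD1 c) //=; apply: (lt_le_trans hP).
by rewrite lerDl; apply: sumr_ge0.
Qed.

Lemma pth_stepR m x y z : pth m x y -> (m <= y.2)%N -> 0 < trans y z -> pth m x z.
Proof.
move=> h hy hyz; apply: pth_trans h _; exact: pthS hy hyz (pth0 _ _).
Qed.

Lemma preach_path x : reach Pz Pp (p, 1%N) x -> pth 1 x q0 ->
  exists s, path eb x s /\ last x s = q0.
Proof.
move=> hr hp; move: hp hr.
have : forall z, pth 1 x z -> z = q0 -> reach Pz Pp (p, 1%N) x -> exists s, path eb x s /\ last x s = z.
  move=> z; elim=> {x z} [x|x y z hx hxy hp IH] ez hr; first by exists [::].
  have hry : reach Pz Pp (p, 1%N) y.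
    by apply: (@pth_reach 0); apply: pth_trans (reach_pth hr) (pthS _ hxy (pth0 _ _)).
  have [s [hs hl]] := IH ez hry.
  exists (y :: s); split => //=; rewrite hs andbT; apply/asboolP; split.
    by split => //; split => //; rewrite -ez; exact: pthS hx hxy hp.
  move: hxy; case: x hx {hr hp IH} => s0 i /= hi; case: y {hry hs hl} => t j /=.
  rewrite transE_pos // => /sum_pos_ex [c [/eqP hc hP]].
  by exists c.
by move=> H hp hr; apply: H hp (erefl _) hr.
Qed.

Lemma path_box N s x : (forall z, good z -> (z.2 <= N)%N) -> path eb x s -> last x s = q0 ->
  all (fun z : Q * nat => (z.2 <= N)%N) (x :: s).
Proof.
move=> hN; elim: s x => [|y s IH] x /=; first by move=> _ ->; rewrite andbT.
move=> /andP [/asboolP [hgx _] hp] hl.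
by rewrite hN //=; apply: IH.
Qed.

Lemma size_box N s : uniq s -> all (fun z : Q * nat => (z.2 <= N)%N) s ->
  (size s <= #|Q| * N.+1)%N.
Proof.
move=> hu ha.
have -> : (#|Q| * N.+1)%N = size [seq (a, i) | a <- enum Q, i <- iota 0 N.+1].
  by rewrite size_allpairs size_iota -cardE.
apply: uniq_leq_size hu _ => z hz.
have hz2 := allP ha z hz.
apply/allpairsP; exists (z.1, z.2); split.
- by rewrite mem_enum.
- by rewrite mem_iota add0n ltnS.
- exact: surjective_pairing.
Qed.

Lemma short_path N x : (forall z, good z -> (z.2 <= N)%N) -> good x ->
  exists s, [/\ path eb x s, last x s = q0 & (size s < #|Q| * N.+1)%N].
Proof.
move=> hN [hr [hx hp]].
have [s [hs hl]] := preach_path hr hp.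
move: hl; case: (shortenP hs) => s' hs' hu _ hl.
exists s'; split => //.
have := size_box hu (path_box hN hs' hl).
by [].
Qed.

Lemma mul_pos_split (a b : R) : 0 <= a -> 0 <= b -> 0 < a * b -> 0 < a /\ 0 < b.
Proof.
move=> ha hb hab; split; rewrite lt0r ?ha ?hb andbT; apply/eqP => e; move: hab;
  by rewrite e ?mul0r ?mulr0 ltxx.
Qed.

Lemma hit0_pth n x : 0 < hit0 n x -> pth 1 x q0.
Proof.
elim: n x => [|n IH] x /=.
  by case: (eqVneq x q0) => [->|_]; [move=> _; exact: pth0 | rewrite ltxx].
case: ifP => hx; last by rewrite ltxx.
move=> /sum_pos_ex [c [_ /sum_pos_ex [r [_ h]]]].
have [h1 h2] := mul_pos_split (Pp0 _ _ _) (hit0_ge0 _ _) h.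
exact: pthS hx (step_Pp hx h1) (IH _ h2).
Qed.

Lemma hit0_zero x : ~ pth 1 x q0 -> forall n, hit0 n x = 0.
Proof.
move=> hp n; apply/eqP; rewrite eq_le hit0_ge0 andbT leNgt; apply/negP => h.
by apply: hp; exact: hit0_pth h.
Qed.

Lemma reach_step_Pp x c r : reach Pz Pp (p, 1%N) x -> (0 < x.2)%N -> 0 < Pp x.1 c r ->
  reach Pz Pp (p, 1%N) (r, (x.2 + c - 1)%N).
Proof.
move=> hr hx hP; apply: (@pth_reach 0); apply: pth_trans (reach_pth hr) _.
exact: pthS (leq0n _) (step_Pp hx hP) (pth0 _ _).
Qed.

Lemma tail k x M : reach Pz Pp (p, 1%N) x ->
  \sum_(m < M) hit0 (m + k.+1) x <= iter k Op g0 x.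
Proof.
elim: k x => [|k IH] x hr /=.
  rewrite /g0; case hgx: (goodb x).
    rewrite (_ : (true%:R : R) = 1) //; apply: le_trans (V_le1 M.+1 x).
    rewrite big_ord_recl -[X in X <= _]add0r; apply: lerD; first exact: hit0_ge0.
    by apply: ler_sum => i _; rewrite addn1; exact: lexx.
  case: (posnP x.2) => hx.
    by rewrite big1 // => i _; rewrite addn1 /= hx.
  have hnp : ~ pth 1 x q0 by move=> hp; move: hgx; rewrite /goodb asboolT.
  by rewrite big1 // => i _; rewrite hit0_zero.
case: (posnP x.2) => hx.
  by rewrite big1 ?Op_ge0 // => [y|i _]; [exact: iterOp_ge0 g0_ge0 | rewrite addnS /= hx].
case hgx: (goodb x); last first.
  have hnp : ~ pth 1 x q0 by move=> hp; move: hgx; rewrite /goodb asboolT.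
  by rewrite big1 ?Op_ge0 // => [y|i _]; [exact: iterOp_ge0 g0_ge0 | rewrite hit0_zero].
under eq_bigr => i _ do rewrite addnS /= hx.
rewrite (sum_step (fun m y => hit0 (m + k.+1) y) M x.1 x.2) /Op hgx.
apply: ler_sum => c _; apply: ler_sum => r _.
case: (eqVneq (Pp x.1 c r) 0) => [->|hP]; first by rewrite !mul0r.
have hP' : 0 < Pp x.1 c r by rewrite lt0r hP Pp0.
apply: ler_wpM2l => //; apply: IH.
exact: reach_step_Pp.
Qed.

Lemma sum_widen_le (F : nat -> R) M N : (M <= N)%N -> (forall k, 0 <= F k) ->
  \sum_(k < M) F k <= \sum_(k < N) F k.
Proof.
move=> hMN h0; rewrite (big_ord_widen N F hMN) [X in _ <= X]big_mkcond /=.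
rewrite big_mkcond /=; apply: ler_sum => i _; case: ifP => // _; exact: h0.
Qed.

Lemma shift_le (h : nat -> R) k M : (forall m, 0 <= h m) ->
  \sum_(m < M | (k < m)%N) h m <= \sum_(m < M) h (m + k.+1)%N.
Proof.
move=> h0.
rewrite -(big_mkord (fun m => (k < m)%N) h) -(big_mkord xpredT (fun m => h (m + k.+1)%N)).
case: (leqP M k.+1) => hM.
  rewrite big_nat_cond big1 ?sumr_ge0 // => m /andP [/andP [_ hm] hkm]; lia.
rewrite (big_cat_nat (leq0n k.+1) (ltnW hM)) /=.
rewrite [X in X + _]big_nat_cond [X in X + _]big1 ?add0r; last first.
  by move=> m /andP [/andP [_ hm] hkm]; lia.
rewrite big_nat_cond (eq_bigl (fun m => (k.+1 <= m < M)%N)); last first.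
  by move=> m; apply/andP/idP => [[//]|hm]; split => //; lia.
rewrite -{1}(add0n k.+1) big_addn.
rewrite (big_cat_nat (leq0n (M - k.+1)) (_ : (M - k.+1 <= M)%N)) /=; last by lia.
apply: (@le_trans _ _ (\sum_(0 <= i < M - k.+1) h (i + k.+1)%N)).
  rewrite [X in X <= _]big_mkcond /=; apply: ler_sum => i _; case: ifP => // _; exact: h0.
by rewrite lerDl sumr_ge0.
Qed.

Lemma mul_tail (h : nat -> R) M : (forall m, 0 <= h m) ->
  \sum_(m < M) m%:R * h m <= \sum_(k < M) \sum_(m < M) h (m + k.+1)%N.
Proof.
move=> h0.
have E : forall m : 'I_M, m%:R * h m = \sum_(k < M) (if (k < m)%N then h m else 0).
  move=> m; rewrite -big_mkcond /= -(big_ord_widen M (fun _ => h m) (ltnW (ltn_ord m))).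
  by rewrite sumr_const card_ord mulr_natl.
rewrite (eq_bigr _ (fun m _ => E m)) exchange_big /=.
apply: ler_sum => k _; rewrite -big_mkcond /=.
exact: shift_le.
Qed.

Lemma hg_le_hit n x : hg n x <= \sum_(m < n.+1) hit0 m x.
Proof.
elim: n x => [|n IH] x.
  by rewrite big_ord1 /= addr0.
rewrite big_ord_recl /=; apply: lerD => //.
rewrite /Op; case hgx: (goodb x); last first.
  by apply: sumr_ge0 => i _; exact: (hit0_ge0 (0 + i).+1 x).
have hx := goodb_pos hgx.
rewrite (eq_bigr (fun i : 'I_n.+1 => \sum_(c : 'I_3) \sum_(r : Q) Pp x.1 c r * hit0 i (r, (x.2 + c - 1)%N))); last first.
  by move=> i _; rewrite /= hx.
rewrite (sum_step (fun m y => hit0 m y) n.+1 x.1 x.2).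
by apply: ler_sum => c _; apply: ler_sum => r _; apply: ler_wpM2l => //.
Qed.

Lemma contraction (L : nat) (d : R) : (0 < L)%N -> 0 < d -> d <= 1 ->
  (forall x, iter L Op g0 x <= (1 - d) * g0 x) ->
  forall j x, \sum_(k < j * L) iter k Op g0 x <= L%:R / d.
Proof.
move=> hL hd hd1 hc; elim=> [|j IH] x.
  by rewrite mul0n big_ord0 divr_ge0 ?ler0n // ltW.
have a_le1 : forall k y, iter k Op g0 y <= 1.
  by move=> k y; apply: le_trans (a_hg k y); rewrite lerDl hg_ge0.
rewrite mulSn big_split_ord /=.
have h1 : \sum_(i < L) iter (lshift (j * L) i) Op g0 x <= L%:R.
  apply: (@le_trans _ _ (\sum_(i < L) (1:R))); first by apply: ler_sum => i _; exact: a_le1.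
  by rewrite sumr_const card_ord.
have h2 : \sum_(i < j * L) iter (rshift L i) Op g0 x <= (1 - d) * (L%:R / d).
  apply: le_trans (_ : (1 - d) * \sum_(i < j * L) iter i Op g0 x <= _); last first.
    by apply: ler_wpM2l; [rewrite subr_ge0 | exact: IH].
  rewrite mulr_sumr; apply: ler_sum => i _ /=.
  rewrite addnC iterD -iterOp_scale; apply: iterOp_le => y; exact: hc.
apply: le_trans (lerD h1 h2) _.
rewrite le_eqVlt; apply/orP; left; apply/eqP; field.
by rewrite gt_eqF.
Qed.

Lemma main_bound (xm : R) (B : nat) :
  0 < xm -> xm <= 1 -> (forall s c r, 0 < Pp s c r -> xm <= Pp s c r) ->
  (forall y, reach Pz Pp (p, 1%N) y -> reach Pz Pp y q0 -> (y.2 <= B)%N) ->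
  pth 1 (p, 1%N) q0 ->
  (forall M, \sum_(m < M) m%:R * hit0 m (p, 1%N) <=
             (#|Q| * #|Q|.+1)%N%:R / xm ^+ (#|Q| * #|Q|.+1)) /\
  xm ^+ (#|Q| * #|Q|.+1) <= \sum_(m < (#|Q| * #|Q|.+1).+1) hit0 m (p, 1%N).
Proof.
move=> xm0 xm1 hxm hB hp0.
set L := (#|Q| * #|Q|.+1)%N.
set d := xm ^+ L.
have hQ : (0 < #|Q|)%N by apply/card_gt0P; exists p.
have hL : (0 < L)%N by rewrite /L muln_gt0 hQ.
have hd : 0 < d by rewrite /d exprn_gt0.
have hd1 : d <= 1 by rewrite /d exprn_ile1 // ltW.
have goodN : forall z, good z -> (z.2 <= #|Q|)%N.
  by move=> [r k] [hr [_ hp]]; exact: (counter_bound hB hr hp).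
have hgL : forall x, good x -> d <= hg L x.
  move=> x hx; have [s [hs hl hsz]] := short_path goodN hx.
  apply: le_trans (hg_monotone x (ltnW hsz)).
  apply: le_trans (hg_path (ltW xm0) hxm hs hl).
  by rewrite /d; apply: ler_wiXn2l => //; [exact: ltW | exact: ltnW].
have hx0 : good (p, 1%N) by split; [exact: reach_refl | split].
have hc : forall x, iter L Op g0 x <= (1 - d) * g0 x.
  move=> x; rewrite /g0; case hgx: (goodb x).
    rewrite (_ : (true%:R : R) = 1) // mulr1 lerBrDr.
    apply: le_trans (a_hg L x); apply: lerD => //; apply: hgL; exact/asboolP.
  rewrite (_ : (false%:R : R) = 0) // mulr0 -(prednK hL) /= /Op hgx.
  exact: lexx.
split.
  move=> M; apply: le_trans (mul_tail M (fun m => hit0_ge0 m (p, 1%N))) _.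
  apply: (@le_trans _ _ (\sum_(k < M) iter k Op g0 (p, 1%N))).
    by apply: ler_sum => k _; apply: tail; exact: reach_refl.
  have hw : \sum_(k < M) iter k Op g0 (p, 1%N) <= \sum_(k < M * L) iter k Op g0 (p, 1%N).
    by apply: (@sum_widen_le (fun k => iter k Op g0 (p, 1%N))); [rewrite leq_pmulr | move=> k; apply: iterOp_ge0 g0_ge0].
  apply: le_trans hw _.
  exact: contraction hL hd hd1 hc M (p, 1%N).
apply: le_trans (hg_le_hit L (p, 1%N)); exact: hgL.
Qed.

End Proofs.

Local Open Scope classical_set_scope.

Lemma nneseries_le_bound (R : realType) (u : nat -> R) (B : R) :
  (forall n, 0 <= u n) -> (forall k, \sum_(i < k) u i <= B) ->
  (\sum_(n <oo) (u n)%:E <= B%:E)%E.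
Proof.
move=> u0 hB.
apply: lime_le.
  by apply: is_cvg_nneseries => n _ _; rewrite lee_fin.
apply: nearW => k.
by rewrite sumEFin lee_fin big_mkord; apply: hB.
Qed.

Unset Implicit Arguments.

Theorem mainTheorem7 (R : realType) (Q : finType)
  (Pz : Q -> 'I_2 -> Q -> R) (Pp : Q -> 'I_3 -> Q -> R) (p q : Q) :
  is_pOC Pz Pp ->
  (0 < hitprob Pz Pp p q)%E ->
  finite_set (Pre Pz Pp [set (q, 0%N)] `&` Post Pz Pp [set (p, 1%N)]) ->
  (condE Pz Pp p q <=
     ((15 * #|Q| ^ 3)%:R / xmin Pz Pp ^+ (4 * #|Q| ^ 3))%:E)%E.
Proof.
move=> [_ [hPp0 [_ [hPp1 _]]]] hpos hfin.
have [B hB] : exists B, forall y, reach Pz Pp (p, 1%N) y -> reach Pz Pp y (q, 0%N) -> (y.2 <= B)%N.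
  have [X hX] := finite_fsetP.1 hfin.
  exists (\max_(y <- finmap.enum_fset X) y.2)%N => y h1 h2.
  have hy : (Pre Pz Pp [set (q, 0%N)] `&` Post Pz Pp [set (p, 1%N)]) y.
    by split; [exists (q, 0%N) | exists (p, 1%N)].
  rewrite hX /= in hy.
  exact: (leq_bigmax_seq (F := fun y : Q * nat => y.2) y hy).
set xm := xmin Pz Pp.
have hxm : forall s c r, 0 < Pp s c r -> xm <= Pp s c r.
  move=> s c r h; rewrite /xm /xmin ge_min; apply/orP; right.
  exact: (bigmin_le_cond 1 (j := (s, c, r)) (P := fun t => 0 < Pp t.1.1 t.1.2 t.2)).
have xm0 : 0 < xm.
  rewrite /xm /xmin lt_min; apply/andP; split; apply: lt_bigmin => //; exact: ltr01.
have xm1 : xm <= 1.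
  by rewrite /xm /xmin ge_min bigmin_le_id.
have hp0 : pth Pz Pp 1 (p, 1%N) (q, 0%N).
  case: (pselect (exists n, 0 < hitn Pz Pp p q n)) => [[n hn]|H].
    by rewrite hitn_hit0 in hn; exact: (hit0_pth Pz hPp0 hn).
  exfalso; move: hpos; rewrite /hitprob eseries0 ?ltxx // => n _ _.
  congr EFin; apply/eqP; rewrite eq_le hitn_hit0 hit0_ge0 // andbT leNgt.
  by apply/negP => h; apply: H; exists n; rewrite hitn_hit0.
have [hE hH] := main_bound hPp0 hPp1 xm0 xm1 hxm hB hp0.
set N := #|Q|.
set L := (N * N.+1)%N.
set d := xm ^+ L.
have hle1 : (hitprob Pz Pp p q <= 1%:E)%E.
  rewrite /hitprob; apply: nneseries_le_bound.
    by move=> n; rewrite hitn_hit0; exact: hit0_ge0.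
  by move=> k; under eq_bigr do rewrite hitn_hit0; exact: V_le1.
have hge : ((\sum_(m < L.+1) hit0 Pp q m (p, 1%N))%:E <= hitprob Pz Pp p q)%E.
  rewrite /hitprob; apply: le_trans (nneseries_lim_ge L.+1 _); last first.
    by move=> n _ _; rewrite lee_fin hitn_hit0 hit0_ge0.
  rewrite sumEFin big_mkord lee_fin; apply: ler_sum => i _; rewrite hitn_hit0; exact: lexx.
set h := fine (hitprob Pz Pp p q).
have hd : 0 < d by rewrite /d exprn_gt0.
have hfin' : hitprob Pz Pp p q = h%:E.
  rewrite /h fineK // ge0_fin_numE; last first.
    apply: le_trans hge; rewrite lee_fin; apply: sumr_ge0 => i _; exact: hit0_ge0.
  by apply: le_lt_trans hle1 _; exact: ltry.
have hdh : d <= h.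
  by rewrite -lee_fin -hfin'; apply: le_trans hge; rewrite lee_fin.
have hh : 0 < h by apply: lt_le_trans hdh.
rewrite /condE -/h.
apply: le_trans (@nneseries_le_bound _ (fun n => n%:R * hitn Pz Pp p q n / h) (L%:R / d / d) _ _) _.
- move=> n; apply: divr_ge0 (ltW hh); apply: mulr_ge0 => //.
  by rewrite hitn_hit0; exact: hit0_ge0.
- move=> k; rewrite -mulr_suml.
  under eq_bigr do rewrite hitn_hit0.
  apply: ler_pM.
  + by apply: sumr_ge0 => i _; apply: mulr_ge0 => //; exact: hit0_ge0.
  + by rewrite invr_ge0 ltW.
  + exact: hE.
  + by rewrite lef_pV2 ?posrE.
rewrite lee_fin.
have hQ : (0 < N)%N by apply/card_gt0P; exists p.
rewrite -mulrA -invfM -exprD.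
apply: ler_pM.
- by rewrite ler0n.
- by rewrite invr_ge0 exprn_ge0 // ltW.
- by rewrite ler_nat; rewrite /L; nia.
- rewrite lef_pV2 ?posrE ?exprn_gt0 //.
  by apply: ler_wiXn2l => //; [exact: ltW | rewrite /L; nia].
Qed.
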